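(* Let $k>1$ be an integer. Every vertex $v$ of $\mathcal F_k$ is a cut vertex: deleting $v$ (and its incident edges) from the connected component of $\mathcal F_k$ containing $v$ leaves a disconnected graph.
   Context: The vertex set $V$ consists of all reduced fractions $p/q$ with $p,q\in\mathbb Z$, $\gcd(p,q)=1$, together with $1/0$; here $p/q$ and $(-p)/(-q)$ denote the same vertex. For vertices define $d(p/q,a/b)=|pb-qa|$. The graph $\mathcal F_k$ has vertex set $V$, with an edge between $p/q$ and $a/b$ exactly when $d(p/q,a/b)=k$. *)

(* Defs.v *)
From Stdlib Require Import ZArith.
Open Scope Z_scope.

(* A vertex p/q is represented by a pair (p,q) of integers with gcd(p,q)=1;
   1/0 is (1,0). The pairs (p,q) and (-p,-q) denote the same vertex. *)
Definition is_vertex (x : Z * Z) : Prop := Z.gcd (fst x) (snd x) = 1.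

Definition same_vertex (x y : Z * Z) : Prop :=
  x = y \/ (fst x = - fst y /\ snd x = - snd y).

(* d(p/q, a/b) = |p b - q a| (independent of the sign representatives). *)
Definition dist (x y : Z * Z) : Z := Z.abs (fst x * snd y - snd x * fst y).

Definition adjF (k : Z) (x y : Z * Z) : Prop := dist x y = k.

(* Reachability in the subgraph of F_k induced on the vertices satisfying P
   (P is assumed to imply is_vertex). *)
Inductive reach_in (P : Z * Z -> Prop) (k : Z) (x : Z * Z) : Z * Z -> Prop :=
| reach_refl : P x -> reach_in P k x x
| reach_step : forall y z, reach_in P k x y -> P z -> adjF k y z -> reach_in P k x z.

Definition vertex_minus (v : Z * Z) (x : Z * Z) : Prop :=
  is_vertex x /\ ~ same_vertex x v.

(* Main.v *)
Require Import Defs.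
From Stdlib Require Import ZArith Lia.
Open Scope Z_scope.

Section S.
Variables (k p0 q0 r s : Z).
Hypothesis hk : 1 < k.
Hypothesis hdet : p0 * s - q0 * r = 1.

Definition AA (x : Z * Z) := s * fst x - r * snd x.
Definition BB (x : Z * Z) := p0 * snd x - q0 * fst x.
Definition Inv (x : Z * Z) := exists m, BB x = k * m /\ (AA x - k * m) * m < 0.

Lemma inv_fst x : fst x = p0 * AA x + r * BB x.
Proof. unfold AA, BB. transitivity (fst x * (p0 * s - q0 * r)); [rewrite hdet; ring | ring]. Qed.
Lemma inv_snd x : snd x = q0 * AA x + s * BB x.
Proof. unfold AA, BB. transitivity (snd x * (p0 * s - q0 * r)); [rewrite hdet; ring | ring]. Qed.

Lemma bez_AB x : is_vertex x -> exists a b, a * AA x + b * BB x = 1.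
Proof.
  intro H. destruct (Z.gcd_bezout _ _ _ H) as [u [w Hu]].
  exists (u * p0 + w * q0), (u * r + w * s).
  rewrite <- Hu. rewrite (inv_fst x), (inv_snd x). ring.
Qed.

Lemma det_id x y : fst x * snd y - snd x * fst y = AA x * BB y - BB x * AA y.
Proof.
  rewrite (inv_fst x), (inv_snd x), (inv_fst y), (inv_snd y).
  transitivity ((AA x * BB y - BB x * AA y) * (p0 * s - q0 * r)); [ring| rewrite hdet; ring].
Qed.

Lemma step x y : is_vertex x -> Inv x -> is_vertex y -> ~ same_vertex y (p0, q0) ->
  dist x y = k -> Inv y.
Proof.
  intros Vx [m [Hm Hi]] Vy Ny D.
  destruct (bez_AB x Vx) as [a [b Hab]].
  destruct (bez_AB y Vy) as [c [d Hcd]].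
  unfold dist in D. rewrite det_id in D.
  assert (G : Z.gcd k (AA x) = 1).
  { apply Z.bezout_1_gcd. exists (b * m), a. rewrite <- Hab, Hm. ring. }
  assert (Dv : (k | AA x * BB y)).
  { destruct (Z.abs_eq_or_opp (AA x * BB y - BB x * AA y)) as [E|E]; rewrite D in E.
    - exists (1 + m * AA y). rewrite Hm in E. lia.
    - exists (m * AA y - 1). rewrite Hm in E. lia. }
  destruct (Z.gauss _ _ _ Dv G) as [n Hn].
  exists n. split; [lia|].
  rewrite Hm, Hn in D.
  assert (Hd : Z.abs (AA x * n - m * AA y) = 1).
  { assert (E : AA x * (n * k) - k * m * AA y = k * (AA x * n - m * AA y)) by ring.
    rewrite E, Z.abs_mul in D. rewrite (Z.abs_eq k) in D by lia. nia. }
  destruct (Z.lt_trichotomy n 0) as [Hn0|[Hn0|Hn0]].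
  - destruct (Z.lt_ge_cases ((AA y - k * n) * n) 0) as [|Hge]; [assumption|exfalso].
    destruct (Z.eq_dec (AA y) (k * n)) as [Ee|Ne].
    + rewrite Ee, Hn in Hcd. assert (Hk1 : k * (c * n + d * n) = 1) by lia. destruct (Z.eq_mul_1 _ _ Hk1); lia.
    + assert (AA y - k * n < 0) by nia.
      destruct (Z.lt_trichotomy m 0) as [Hm0|[Hm0|Hm0]].
      * assert (k * m - AA x < 0) by nia.
        assert (Ei : AA x * n - m * AA y = - (n * (k * m - AA x) + m * (AA y - k * n))) by ring.
        nia.
      * subst m. lia.
      * assert (k * m - AA x > 0) by nia.
        assert (Ei : AA x * n - m * AA y = - (n * (k * m - AA x) + m * (AA y - k * n))) by ring.
        nia.
  - exfalso. subst n. rewrite Z.mul_0_l in Hn.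
    rewrite Hn, Z.mul_0_r, Z.add_0_r in Hcd.
    rewrite Z.mul_comm in Hcd. apply Z.eq_mul_1 in Hcd.
    apply Ny. unfold same_vertex. destruct y as [y1 y2].
    pose proof (inv_fst (y1, y2)) as F1. pose proof (inv_snd (y1, y2)) as F2.
    rewrite Hn in F1, F2. simpl in F1, F2.
    destruct Hcd as [E|E]; rewrite E in F1, F2; [left|right]; simpl.
    + f_equal; lia.
    + split; lia.
  - destruct (Z.lt_ge_cases ((AA y - k * n) * n) 0) as [|Hge]; [assumption|exfalso].
    destruct (Z.eq_dec (AA y) (k * n)) as [Ee|Ne].
    + rewrite Ee, Hn in Hcd. assert (Hk1 : k * (c * n + d * n) = 1) by lia. destruct (Z.eq_mul_1 _ _ Hk1); lia.
    + assert (AA y - k * n > 0) by nia.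
      destruct (Z.lt_trichotomy m 0) as [Hm0|[Hm0|Hm0]].
      * assert (k * m - AA x < 0) by nia.
        assert (Ei : AA x * n - m * AA y = - (n * (k * m - AA x) + m * (AA y - k * n))) by ring.
        nia.
      * subst m. lia.
      * assert (k * m - AA x > 0) by nia.
        assert (Ei : AA x * n - m * AA y = - (n * (k * m - AA x) + m * (AA y - k * n))) by ring.
        nia.
Qed.

Lemma reach_inv u z : reach_in (vertex_minus (p0, q0)) k u z ->
  Inv u -> vertex_minus (p0, q0) z /\ Inv z.
Proof.
  induction 1 as [Hu|y z R IH Pz Adj]; intro I; [split; assumption|].
  destruct (IH I) as [[Vy _] Iy]. split; [assumption|].
  destruct Pz as [Vz Nz]. exact (step y z Vy Iy Vz Nz Adj).
Qed.

Definition pt (a b : Z) : Z * Z := (p0 * a + r * b, q0 * a + s * b).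

Lemma AA_pt a b : AA (pt a b) = a.
Proof. unfold AA, pt; simpl. transitivity (a * (p0 * s - q0 * r)); [ring| rewrite hdet; ring]. Qed.
Lemma BB_pt a b : BB (pt a b) = b.
Proof. unfold BB, pt; simpl. transitivity (b * (p0 * s - q0 * r)); [ring| rewrite hdet; ring]. Qed.

Lemma pt_vertex a b : Z.Bezout a b 1 -> is_vertex (pt a b).
Proof.
  intros [c [d H]]. apply Z.bezout_1_gcd.
  exists (c * s - d * q0), (d * p0 - c * r). rewrite <- H.
  unfold pt; simpl. transitivity ((c * a + d * b) * (p0 * s - q0 * r)); [ring| rewrite hdet; ring].
Qed.

End S.

Theorem proposition4p14 (k : Z) (hk : 1 < k) (v : Z * Z) (hv : is_vertex v) :
  exists u w : Z * Z,
    reach_in is_vertex k v u /\ reach_in is_vertex k v w /\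
    ~ same_vertex u v /\ ~ same_vertex w v /\
    ~ reach_in (vertex_minus v) k u w.
Proof.
  destruct v as [p0 q0].
  destruct (Z.gcd_bezout _ _ _ hv) as [s [b Hb]]. simpl in Hb.
  set (r := - b).
  assert (hdet : p0 * s - q0 * r = 1) by (unfold r; lia).
  exists (pt p0 q0 r s (k - 1) k), (pt p0 q0 r s (k + 1) k).
  assert (Vu : is_vertex (pt p0 q0 r s (k - 1) k)).
  { apply pt_vertex; auto. exists (-1), 1. ring. }
  assert (Vw : is_vertex (pt p0 q0 r s (k + 1) k)).
  { apply pt_vertex; auto. exists 1, (-1). ring. }
  assert (NS : forall a, ~ same_vertex (pt p0 q0 r s a k) (p0, q0)).
  { intros a Hs. pose proof (BB_pt p0 q0 r s hdet a k) as HB.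
    unfold BB in HB. destruct Hs as [E|[E1 E2]]; [rewrite E in HB; simpl in HB; lia|].
    rewrite E1, E2 in HB. simpl in HB. lia. }
  assert (Adj : forall a, adjF k (p0, q0) (pt p0 q0 r s a k)).
  { intro a. unfold adjF, dist. pose proof (BB_pt p0 q0 r s hdet a k) as HB.
    change (Z.abs (BB p0 q0 (pt p0 q0 r s a k)) = k). rewrite HB. apply Z.abs_eq. lia. }
  repeat split.
  - eapply reach_step; [apply reach_refl; exact hv | exact Vu | apply Adj].
  - eapply reach_step; [apply reach_refl; exact hv | exact Vw | apply Adj].
  - apply NS.
  - apply NS.
  - intro R. apply reach_inv with (p0 := p0) (q0 := q0) (r := r) (s := s) in R; auto.
    + destruct R as [_ [m [Hm Hi]]].
      rewrite (BB_pt p0 q0 r s hdet) in Hm. rewrite (AA_pt p0 q0 r s hdet) in Hi.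
      assert (m = 1) by nia. subst m. lia.
    + exists 1. rewrite (BB_pt p0 q0 r s hdet), (AA_pt p0 q0 r s hdet). lia.
Qed.
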